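(* Let $k$ be a perfect field of characteristic $p$, let $M(x)\in M_n(k[x])$, and let $I_1(x,T),\dots,I_n(x,T)\in k[x,T]$ be the invariant factors of $M(x)$ (viewed as a matrix over $k(x)$). Let $\ell$ be a finite extension of $k$, $a\in\ell$, let $M(a)\in M_n(\ell)$ be the evaluation of $M(x)$ at $x=a$, and let $I_{1,a}(T),\dots,I_{n,a}(T)$ be the invariant factors of $M(a)$. Set $G_j(x,T)=I_1(x,T)\cdots I_j(x,T)$ and $G_{j,a}(T)=I_{1,a}(T)\cdots I_{j,a}(T)$. Then for every $a\in\ell$ and every $j\in\{1,\dots,n\}$, the polynomial $G_j(a,T)$ divides $G_{j,a}(T)$ in $\ell[T]$.
   Context: For a square matrix $N$ of size $n$ over a field $K$, its invariant factors are the unique monic polynomials $I_1\mid I_2\mid\cdots\mid I_n$ in $K[T]$ (with the convention that exactly $n$ of them are listed, some possibly equal to $1$) such that $N$ is similar to the block-diagonal matrix whose diagonal blocks are the companion matrices of $I_1,\dots,I_n$. The invariant factors of $M(x)$ have their product equal to the characteristic polynomial and lie in $k[x,T]$. *)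

(* Defs.v *)
From HB Require Import structures.
From mathcomp Require Import all_boot all_order all_algebra all_field.
Set Implicit Arguments. Unset Strict Implicit. Unset Printing Implicit Defensive.
Import Order.TTheory GRing.Theory.
Local Open Scope ring_scope.

Definition has_char (K : fieldType) (p : nat) : Prop :=
  if p == 0%N then [pchar K] =i pred0 else p \in [pchar K].

Definition perfect_field (K : fieldType) : Prop :=
  [pchar K] =i pred0 \/
  exists2 p, p \in [pchar K] & forall x : K, exists y : K, y ^+ p = x.

Definition invariant_factors (K : fieldType) (n : nat) (N : 'M[K]_n)
    (I : 'I_n -> {poly K}) : Prop :=
  [/\ forall i, I i \is monic,
      forall i j : 'I_n, (i <= j)%N -> I i %| I j
    & exists e : (\sum_(i < n) (size (I i)).-1)%N = n,
      exists2 P : 'M[K]_n, P \in unitmx &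
        P *m N *m invmx P
        = castmx (e, e) (\mxdiag_(i < n) companionmx (I i : seq K))].

(* G_j = I_1 ... I_j (j = i+1 for i : 'I_n). *)
Definition partial_prod (R : comNzRingType) (n : nat) (I : 'I_n -> R) (j : nat) : R :=
  \prod_(i < n | (i < j)%N) I i.

(* Main.v *)
Require Import Defs.
From HB Require Import structures.
From mathcomp Require Import all_boot all_order all_algebra all_field perm zify.
Set Implicit Arguments. Unset Strict Implicit. Unset Printing Implicit Defensive.
Import Order.TTheory GRing.Theory.
Local Open Scope ring_scope.

Section Minors.
Variable K : fieldType.
Local Notation P := {poly K}.

Definition mnr (R : comNzRingType) m n j (A : 'M[R]_(m,n))
  (f : 'I_j -> 'I_m) (g : 'I_j -> 'I_n) := \det (mxsub f g A).

Definition dvdm m n j (d : P) (A : 'M[P]_(m,n)) :=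
  forall f g, d %| @mnr _ m n j A f g.

Lemma dvdm_sub m n m' n' j d (A : 'M[P]_(m,n)) (h1 : 'I_m' -> 'I_m) (h2 : 'I_n' -> 'I_n) :
  dvdm j d A -> dvdm j d (mxsub h1 h2 A).
Proof. by move=> H f g; rewrite /mnr -mxsub_comp; apply: H. Qed.

Lemma det_mul_expand (R : comNzRingType) j m (Y : 'M[R]_(j,m)) (Z : 'M[R]_(m,j)) :
  \det (Y *m Z) = \sum_(h : {ffun 'I_j -> 'I_m}) (\prod_r Y r (h r)) * \det (rowsub h Z).
Proof.
rewrite /(\det _).
transitivity (\sum_(s : 'S_j) \sum_(h : {ffun 'I_j -> 'I_m})
   (-1) ^+ s * \prod_r (Y r (h r) * Z (h r) (s r))).
  apply: eq_bigr => s _; rewrite -big_distrr /=; congr (_ * _).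
  rewrite -(bigA_distr_bigA (fun r k => Y r k * Z k (s r))) /=.
  by apply: eq_bigr => r _; rewrite mxE.
rewrite exchange_big; apply: eq_bigr => h _.
rewrite big_distrr; apply: eq_bigr => s _ /=.
rewrite big_split /= mulrCA; congr (_ * (_ * _)).
by apply: eq_bigr => r _; rewrite mxE.
Qed.

Lemma dvd_det_mull j m (d : P) (Y : 'M[P]_(j,m)) (Z : 'M[P]_(m,j)) :
  (forall h : 'I_j -> 'I_m, d %| \det (rowsub h Z)) -> d %| \det (Y *m Z).
Proof.
move=> H; rewrite det_mul_expand; apply: (big_ind (fun x => d %| x)) => [|x y|h _].
- exact: dvdp0.
- exact: dvdp_add.
- by apply: dvdp_mull; apply: H.
Qed.

Lemma dvdm_mull m n m' j d (X : 'M[P]_(m',m)) (A : 'M[P]_(m,n)) :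
  dvdm j d A -> dvdm j d (X *m A).
Proof.
move=> H f g; rewrite /mnr mxsub_mul; apply: dvd_det_mull => h.
rewrite -mxsub_comp; exact: (H h g).
Qed.

Lemma dvdm_tr m n j d (A : 'M[P]_(m,n)) : dvdm j d A -> dvdm j d A^T.
Proof. by move=> H f g; rewrite /mnr -det_tr trmx_mxsub trmxK; apply: H. Qed.

Lemma dvdm_mulr m n n' j d (A : 'M[P]_(m,n)) (Y : 'M[P]_(n,n')) :
  dvdm j d A -> dvdm j d (A *m Y).
Proof.
move=> H; rewrite -[A *m Y]trmxK trmx_mul; apply: dvdm_tr.
by apply: dvdm_mull; apply: dvdm_tr.
Qed.

Lemma dvdm_mul m n m' n' j d (X : 'M[P]_(m',m)) (A : 'M[P]_(m,n)) (Y : 'M[P]_(n,n')) :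
  dvdm j d A -> dvdm j d (X *m A *m Y).
Proof. by move=> H; apply: dvdm_mulr; apply: dvdm_mull. Qed.
Lemma sum_delta (R : pzSemiRingType) n (c : 'I_n) (F : 'I_n -> R) :
  \sum_(k < n) ((c == k)%:R * F k) = F c.
Proof.
rewrite (bigD1 c) //= eqxx mul1r big1 ?addr0 // => k /negPf.
by rewrite eq_sym => ->; rewrite mul0r.
Qed.

Lemma sum_deltan (R : pzSemiRingType) n (c : 'I_n) (x : R) (F : 'I_n -> R) :
  \sum_(k < n) ((x *+ (c == k)) * F k) = x * F c.
Proof.
rewrite (bigD1 c) //= eqxx mulr1n big1 ?addr0 // => k /negPf.
by rewrite eq_sym => ->; rewrite mulr0n mul0r.
Qed.

Lemma colsub_mul (R : pzSemiRingType) m n n' (M : 'M[R]_(m,n)) (h : 'I_n' -> 'I_n) :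
  M *m \matrix_(s, t) ((s == h t)%:R) = \matrix_(r, t) M r (h t).
Proof.
apply/matrixP => r t; rewrite !mxE (bigD1 (h t)) //= mxE eqxx mulr1 big1 ?addr0 //.
by move=> s /negPf hs; rewrite mxE hs mulr0.
Qed.

Definition erow n (p : {poly K}) : 'rV[{poly K}]_n :=
  \row_(s < n) (if s == n.-1 :> nat then p else 1).

Lemma companion_equiv n (p : {poly K}) (C : 'M[K]_n) :
  p \is monic -> n = (size p).-1 ->
  (forall i j, C i j = if i == n.-1 :> nat then - p`_j else (i.+1 == j)%:R) ->
  {X : 'M[{poly K}]_n * 'M[{poly K}]_n * 'M[{poly K}]_n * 'M[{poly K}]_n |
    char_poly_mx C = X.1.1.1 *m diag_mx (erow n p) *m X.1.1.2 /\
    diag_mx (erow n p) = X.1.2 *m char_poly_mx C *m X.2}.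
Proof.
case: n C => [|d] C pm hn hC.
  by exists (0, 0, 0, 0); split; apply/matrixP => [[]].
have sp : size p = d.+2 by rewrite (polySpred (monic_neq0 pm)) -hn.
have lp : p`_d.+1 = 1 by move/monicP: pm; rewrite lead_coefE sp.
pose q (s : nat) := \sum_(i < d.+2) (if (s <= i)%N then (p`_i)%:P * 'X^(i - s) else 0).
have q0 : q 0%N = p.
  rewrite /q -[RHS]coefK poly_def sp; apply: eq_bigr => i _.
  by rewrite subn0 mul_polyC.
have qS : forall s, (s <= d)%N -> q s = 
   \sum_(i < d.+1) (if (s <= i)%N then (p`_i)%:P * 'X^(i - s) else 0) + 'X^(d.+1 - s).
  move=> s sd; rewrite /q big_ord_recr /= ifT ?(leq_trans sd) // lp mul1r //.
pose V1 : 'M[{poly K}]_d.+1 := \matrix_(k, s) (if (s <= k)%N then 'X^(k - s) else 0).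
pose U1 : 'M[{poly K}]_d.+1 := \matrix_(r, s)
  (if r == d :> nat then (if s == d :> nat then 1 else q s.+1) else - ((r == s)%:R)).
pose Bm : 'M[{poly K}]_d.+1 := \matrix_(r, s)
  (if r == d :> nat then q s else - ((r.+1 == s)%:R)).
pose Fm : 'M[{poly K}]_d.+1 := \matrix_(r, s)
  (if r == d :> nat then (s == 0 :> nat)%:R * p else ((r.+1 == s)%:R)).
have eB : char_poly_mx C *m V1 = Bm.
  apply/matrixP => r s; rewrite !mxE.
  under eq_bigr do rewrite !mxE hC.
  have [rd|rd] := eqVneq (r : nat) d.
    have -> : r = ord_max by apply: val_inj.
    have sd : (s <= d)%N by rewrite -ltnS.
    under eq_bigr => i _ do rewrite polyCN opprK mulrDl.
    rewrite big_split /= sum_deltan qS // ifT // addrC; congr (_ + _).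
      by apply: eq_bigr => i _; case: ifP; rewrite ?mulr0.
    by rewrite -exprS subSn.
  have rlt : (r < d)%N by rewrite ltn_neqAle rd -ltnS ltn_ord.
  have rlt' : (r.+1 < d.+1)%N by [].
  pose c : 'I_d.+1 := Ordinal rlt'.
  under eq_bigr => i _ do rewrite polyC_natr (_ : (r.+1 == i :> nat) = (c == i)) // mulrBl.
  rewrite sumrB !sum_deltan /= mul1r.
  case: (ltngtP s r) => hs.
  - rewrite ifT; last by rewrite leqW // ltnW.
    rewrite -exprS -subSn ?(ltnW hs) // subrr.
    have -> : (r.+1 == s :> nat) = false by rewrite gtn_eqF // ltnS ltnW.
    by rewrite oppr0.
  - rewrite mulr0 sub0r.
    case: (ltngtP s r.+1) => hs'.
    + by move: hs'; rewrite ltnS leqNgt hs.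
    + by rewrite oppr0.
    + by rewrite hs' subnn expr0.
  - rewrite hs leqnSn subnn subSnn expr0 expr1 mulr1 subrr.
    by rewrite (gtn_eqF (ltnSn r)) oppr0.
have eF : U1 *m Bm = Fm.
  apply/matrixP => r t; rewrite !mxE.
  under eq_bigr do rewrite !mxE.
  have [rd|rd] := eqVneq (r : nat) d; last first.
    under eq_bigr do rewrite mulNr.
    by rewrite sumrN sum_delta ifF ?(negPf rd) // opprK.
  rewrite big_ord_recr /= eqxx mul1r.
  under eq_bigr => s _ do rewrite (ltn_eqF (ltn_ord s)) mulrN.
  rewrite sumrN.
  case: t => [[|t'] ht] /=.
    by rewrite big1 ?oppr0 ?add0r ?mul1r // => s _; rewrite mulr0.
  have ht' : (t' < d)%N by [].
  pose c : 'I_d := Ordinal ht'.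
  have ec : forall s : 'I_d, (s.+1 == t'.+1 :> nat) = (c == s).
    by move=> s; rewrite eqSS eq_sym.
  under eq_bigr => s _ do rewrite ec mulrC.
  by rewrite sum_delta mul0r addNr.
pose h1 (t : 'I_d.+1) : 'I_d.+1 := inord (if (t < d)%N then t.+1 else 0%N).
pose h2 (t : 'I_d.+1) : 'I_d.+1 := inord (if t == 0 :> nat then d else t.-1).
have eD : Fm *m \matrix_(s, t) ((s == h1 t)%:R) = diag_mx (erow d.+1 p).
  rewrite colsub_mul; apply/matrixP => r t; rewrite !mxE /=.
  have vh1 : (h1 t : nat) = if (t < d)%N then t.+1 else 0%N.
    by rewrite inordK //; case: ifP.
  rewrite -!val_eqE vh1 /=.
  have [td|td] := ltnP t d.
    have [rd|rd] := eqVneq (r : nat) d.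
      by rewrite rd (gtn_eqF td) mul0r.
    by rewrite eqSS.
  have tE : (t : nat) = d by apply/eqP; rewrite eqn_leq td -ltnS ltn_ord.
  rewrite tE.
  have [rd|rd] := eqVneq (r : nat) d; first by rewrite mul1r.
  by [].
have eD' : diag_mx (erow d.+1 p) *m \matrix_(s, t) ((s == h2 t)%:R) = Fm.
  rewrite colsub_mul; apply/matrixP => r t; rewrite !mxE /=.
  have vh2 : (h2 t : nat) = if t == 0 :> nat then d else t.-1.
    rewrite inordK //; case: ifP => // _; exact: leq_ltn_trans (leq_pred _) (ltn_ord t).
  rewrite (_ : (r == h2 t) = ((r : nat) == h2 t)) // vh2; clear vh2.
  case: t => [[|t'] ht] /=.
    have [rd|rd] := eqVneq (r : nat) d; first by rewrite mul1r.
    by [].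
  have [rd|rd] := eqVneq (r : nat) d.
    by rewrite rd mul0r (gtn_eqF (ht : (t' < d)%N)) mulr0n.
  by [].
have uV : V1 \in unitmx.
  rewrite unitmxE det_trig; last first.
    by apply/is_trig_mxP => i j lij; rewrite mxE leqNgt lij.
  by rewrite big1 ?unitr1 // => i _; rewrite mxE leqnn subnn expr0.
have uU : U1 \in unitmx.
  rewrite unitmxE det_trig; last first.
    apply/is_trig_mxP => i j lij; rewrite mxE.
    have -> : (i == d :> nat) = false.
      by rewrite ltn_eqF // (leq_trans lij) // -ltnS ltn_ord.
    have -> : (i == j) = false.
      by apply/negbTE; rewrite -(inj_eq val_inj) /= neq_ltn lij.
    by rewrite oppr0.
  apply: unitr_prod => i _.
  rewrite mxE eqxx; case: ifP => [->|_]; first exact: unitr1.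
  by rewrite mulr1n unitrN unitr1.
exists (invmx U1, \matrix_(s, t) ((s == h2 t)%:R) *m invmx V1, U1,
  V1 *m \matrix_(s, t) ((s == h1 t)%:R)) => /=.
split.
  by rewrite mulmxA -(mulmxA (invmx U1)) eD' -eF -eB mulKmx // mulmxK.
by rewrite !mulmxA -(mulmxA U1) eB eF eD.
Qed.
Lemma chain_prod n (I : 'I_n -> {poly K})
  (chain : forall i i' : 'I_n, (i <= i')%N -> I i %| I i') :
  forall j (S : {set 'I_n}), #|S| = j ->
    \prod_(i < n | (i < j)%N) I i %| \prod_(i in S) I i.
Proof.
elim => [|j IH] S hS.
  by rewrite [X in X %| _]big_pred0 ?dvd1p // => i.
have /set0Pn [x0 xS] : S != set0 by rewrite -card_gt0 hS.
case: (@arg_maxnP _ x0 (mem S) val xS) => m mS mmax.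
have jm : (j <= m)%N.
  rewrite -ltnS -hS cardE -(size_map val) -(size_iota 0 m.+1).
  apply: uniq_leq_size; first by rewrite map_inj_uniq ?enum_uniq //; exact: val_inj.
  move=> x /mapP [y]; rewrite mem_enum => yS ->.
  by rewrite mem_iota add0n ltnS; apply: mmax.
have jn : (j < n)%N.
  by rewrite -hS -[X in (_ <= X)%N](card_ord n) max_card.
rewrite (big_setD1 m mS) /= (bigD1 (Ordinal jn)) //=.
apply: dvdp_mul; first exact: chain.
have -> : \prod_(i < n | (i < j.+1)%N && (i != Ordinal jn)) I i =
          \prod_(i < n | (i < j)%N) I i.
  apply: eq_bigl => i; rewrite ltnS ltn_neqAle andbC.
  by rewrite -(inj_eq val_inj).
apply: IH; move: hS; rewrite (cardsD1 m) (_ : (m \in S) = true) // add1n.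
by case.
Qed.

Lemma diag_minor_dvd n j (I : 'I_n -> {poly K})
  (chain : forall i i' : 'I_n, (i <= i')%N -> I i %| I i') (f g : 'I_j -> 'I_n) :
  \prod_(i < n | (i < j)%N) I i %| mnr (diag_mx (\row_i I i)) f g.
Proof.
rewrite /mnr.
have [finj|/injectivePn [r1 [r2 nr fr]]] := boolP (injectiveb f); last first.
  by rewrite (determinant_alternate nr) ?dvdp0 // => c; rewrite !mxE fr.
have -> : mxsub f g (diag_mx (\row_i I i)) =
          diag_mx (\row_r I (f r)) *m mxsub f g 1%:M.
  apply/matrixP => r s; rewrite !mxE (bigD1 r) //= big1 ?addr0; last first.
    by move=> r' /negPf nr; rewrite !mxE eq_sym nr mulr0n mul0r.
  by rewrite !mxE eqxx mulr1n mulr_natr.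
rewrite det_mulmx det_diag; apply: dvdp_mulr.
under eq_bigr do rewrite mxE.
have -> : \prod_(r < j) I (f r) = \prod_(i in f @: [set: 'I_j]) I i.
  rewrite big_imset /=; last by move=> x y _ _; apply: (injectiveP _ finj).
  by apply: eq_bigl => x; rewrite in_setT.
apply: chain_prod => //; rewrite card_imset ?cardsT ?card_ord //.
exact: (injectiveP _ finj).
Qed.

Lemma diag_minor_lead n j (I : 'I_n -> {poly K}) (hj : (j <= n)%N) :
  mnr (diag_mx (\row_i I i)) (widen_ord hj) (widen_ord hj) =
  \prod_(i < n | (i < j)%N) I i.
Proof.
rewrite /mnr (_ : mxsub _ _ _ = diag_mx (\row_r I (widen_ord hj r))); last first.
  by apply/matrixP => r s; rewrite !mxE.
rewrite det_diag; under eq_bigr do rewrite mxE.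
symmetry; rewrite (eq_bigl (fun i : 'I_n => true && (i < j)%N)) //.
by rewrite big_ord_narrow_cond.
Qed.
End Minors.

Lemma map_mxdiag (aR rR : nmodType) (f : aR -> rR) (f0 : f 0 = 0) p (p_ : 'I_p -> nat)
   (B : forall i, 'M[aR]_(p_ i)) :
  map_mx f (\mxdiag_i B i) = \mxdiag_i (map_mx f (B i)).
Proof.
apply/matrixP => s t; rewrite !mxE.
case: eqP => e; last by rewrite !mxE f0.
have h0 : forall a b, (0 : 'M[rR]_(a,b)) = map_mx f 0.
  by move=> a b; apply/matrixP => ? ?; rewrite !mxE f0.
by rewrite h0 -map_conform_mx mxE.
Qed.

Lemma mxdiag_mul (R : comNzRingType) p (p_ : 'I_p -> nat) (A B : forall i, 'M[R]_(p_ i)) :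
  \mxdiag_i A i *m \mxdiag_i B i = \mxdiag_i (A i *m B i).
Proof.
rewrite {2}/mxdiag mul_mxdiag_mxblock /mxdiag; apply/eq_mxblock => i j.
by case: eqVneq => [<-|_]; rewrite ?conform_mx_id ?mulmx0.
Qed.

Lemma cpm_mxdiag (R : comNzRingType) p (p_ : 'I_p -> nat) (B : forall i, 'M[R]_(p_ i)) :
  char_poly_mx (\mxdiag_i B i) = \mxdiag_i (char_poly_mx (B i)).
Proof.
rewrite /char_poly_mx map_mxdiag ?polyC0 //.
by rewrite -[X in X - _](mxdiagZ (p_ := p_)) -mxdiagB.
Qed.

Lemma cpm_castmx (R : comNzRingType) m n (e : m = n) (A : 'M[R]_m) :
  char_poly_mx (castmx (e, e) A) = castmx (e, e) (char_poly_mx A).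
Proof.
apply/matrixP => i j; rewrite !(castmxE, mxE).
by rewrite (inj_eq (@cast_ord_inj _ _ _)).
Qed.

Lemma castmx_sub (T : Type) m n (e : m = n) (A : 'M[T]_m) :
  castmx (e, e) A = mxsub (cast_ord (esym e)) (cast_ord (esym e)) A.
Proof. by apply/matrixP => i j; rewrite !(castmxE, mxE). Qed.

Lemma cpm_conj (R : comNzRingType) n (P Q A : 'M[R]_n) : P *m Q = 1%:M ->
  char_poly_mx (P *m A *m Q) = map_mx polyC P *m char_poly_mx A *m map_mx polyC Q.
Proof.
move=> PQ; rewrite /char_poly_mx !map_mxM mulmxBr mulmxBl; congr (_ - _).
by rewrite mul_mx_scalar -scalemxAl -map_mxM PQ map_mx1 scalemx1.
Qed.

Lemma perm_from_count n (T : eqType) (F G : 'I_n -> T) :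
  (forall a : pred T, \sum_(t < n | a (F t)) 1 = \sum_(t < n | a (G t)) 1)%N ->
  exists s : 'S_n, forall t, G t = F (s t).
Proof.
move=> H.
have : perm_eq [seq G t | t <- enum 'I_n] [tuple F t | t < n].
  apply/seq.permP => a; rewrite /= -!sum1_count !big_map.
  exact: (esym (H a)).
case/tuple_permP => s hs; exists s => t.
have := congr1 (fun x : seq T => nth (G t) x t) hs.
rewrite /= (nth_map t) ?size_enum_ord // nth_ord_enum.
rewrite (nth_map t) ?size_enum_ord // nth_ord_enum => ->.
by rewrite tnth_mktuple.
Qed.

Lemma block_count (T : eqType) (a : pred T) (m : nat) (one x : T) :
  (m = 0%N -> x = one) ->
  (\sum_(k < m | a (if k == m.-1 :> nat then x else one)) 1 + (m == 0%N) * a one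
    = m.-1 * a one + a x)%N.
Proof.
case: m => [|m] hx.
  by rewrite big_ord0 hx // mul1n mul0n.
rewrite big_mkcond big_ord_recr /= eqxx addn0.
under eq_bigr => k _ do rewrite (ltn_eqF (ltn_ord k)).
by rewrite sum_nat_const card_ord; case: (a x); case: (a one).
Qed.

Lemma total_count n (d : 'I_n -> nat) (hd : (\sum_i d i)%N = n) (T : eqType)
  (a : pred T) (one : T) (x : 'I_n -> T) (hx : forall i, d i = 0%N -> x i = one) :
  (\sum_i \sum_(k < d i | a (if k == (d i).-1 :> nat then x i else one)) 1
    = \sum_(i < n | a (x i)) 1)%N.
Proof.
have H : (\sum_i (\sum_(k < d i | a (if k == (d i).-1 :> nat then x i else one)) 1
             + (d i == 0%N) * a one)
         = \sum_i ((d i).-1 * a one + a (x i)))%N.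
  by apply: eq_bigr => i _; apply: block_count; apply: hx.
rewrite !big_split /= -!big_distrl /= in H.
have E : (\sum_i ((d i).-1 + 1) = \sum_i (d i + (d i == 0%N)))%N.
  by apply: eq_bigr => i _; case: (d i) => [|k]; rewrite ?addn1 ?addn0.
rewrite !big_split /= hd sum1_card card_ord addnC in E.
move/eqP: E; rewrite eqn_add2l => /eqP E.
rewrite E in H.
have -> : (\sum_(i < n | a (x i)) 1 = \sum_i (a (x i) : nat))%N.
  by rewrite big_mkcond; apply: eq_bigr => i _; case: (a (x i)).
move: H; set SE := (\sum_(i < n) \sum_(k < d i | _) 1)%N; set P := (_ * a one)%N; set SX := (\sum_(i < n) _)%N. lia.
Qed.

Section Core.
Variable K : fieldType.

Lemma core n (N : 'M[K]_n) (I : 'I_n -> {poly K}) : invariant_factors N I ->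
  forall j d, dvdm j d (char_poly_mx N) <-> dvdm j d (diag_mx (\row_t I t)).
Proof.
case=> Imon Ichain [e [P Pu hP]] j d.
pose dd i := (size (I i)).-1.
pose D0 := \mxdiag_(i < n) companionmx (I i : seq K).
have hb i := @companion_equiv K _ (I i) (companionmx (I i)) (Imon i) (erefl _)
   (fun r s => mxE _ _ _ _).
pose X i := sval (hb i).
pose E := \mxrow_i erow (dd i) (I i).
pose DE := diag_mx E.
have e1 : char_poly_mx D0 = \mxdiag_i (X i).1.1.1 *m DE *m \mxdiag_i (X i).1.1.2.
  rewrite cpm_mxdiag /DE diag_mxrow !mxdiag_mul; apply: eq_mxdiag => i.
  exact: (proj1 (svalP (hb i))).
have e2 : DE = \mxdiag_i (X i).1.2 *m char_poly_mx D0 *m \mxdiag_i (X i).2.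
  rewrite cpm_mxdiag /DE diag_mxrow !mxdiag_mul; apply: eq_mxdiag => i.
  exact: (proj2 (svalP (hb i))).
pose c := cast_ord (esym e).
pose c' := cast_ord e.
have cc : forall M : 'M[{poly K}]_(\sum_i dd i), mxsub c' c' (mxsub c c M) = M.
  by move=> M; apply/matrixP => u v; rewrite !mxE /c /c' !cast_ordK.
have ecast : char_poly_mx (castmx (e,e) D0) = mxsub c c (char_poly_mx D0).
  by rewrite cpm_castmx castmx_sub.
have c1 : char_poly_mx (castmx (e,e) D0) =
    map_mx polyC P *m char_poly_mx N *m map_mx polyC (invmx P).
  by rewrite -hP cpm_conj // mulmxV.
have c2 : char_poly_mx N =
    map_mx polyC (invmx P) *m char_poly_mx (castmx (e,e) D0) *m map_mx polyC P.
  rewrite -cpm_conj ?mulVmx // -hP !mulmxA mulVmx // mul1mx mulmxKV //.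
have step1 : dvdm j d (char_poly_mx N) <-> dvdm j d DE.
  split => H.
  - rewrite e2; apply: dvdm_mul.
    rewrite -(cc (char_poly_mx D0)) -ecast c1.
    by apply: dvdm_sub; apply: dvdm_mul.
  - rewrite c2 ecast e1.
    by apply: dvdm_mul; apply: dvdm_sub; apply: dvdm_mul.
have cnt : forall a : pred {poly K},
    (\sum_(t < n | a (E ord0 (c t))) 1 = \sum_(t < n | a (I t)) 1)%N.
  move=> a; rewrite -(@total_count n dd e _ a 1 I); last first.
    move=> i /= hi; have := Imon i; rewrite monicE lead_coefE => /eqP.
    rewrite -/(dd i) hi => h0.
    have hs : (size (I i) <= 1)%N by move: hi; rewrite /dd; case: (size (I i)) => [|[|]].
    by rewrite [I i]size1_polyC // h0.
  rewrite sig_big_dep /= (reindex (@tagnat.sig _ dd)) /=; last exact/onW_bij/tagnat.sig_bij.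
  rewrite [RHS](reindex c) /=; last first.
    by exists c' => u _; rewrite /c /c' ?cast_ordK ?cast_ordKV.
  by apply: eq_bigl => t; rewrite /E !mxE.
have [s hs] := perm_from_count cnt.
have injg : injective (fun t => c (s t)).
  by move=> x y /cast_ord_inj /perm_inj.
have injg' : injective (fun u => (s^-1)%g (c' u)).
  by move=> x y /perm_inj /cast_ord_inj.
have d1 : diag_mx (\row_t I t) = mxsub (fun t => c (s t)) (fun t => c (s t)) DE.
  by apply/matrixP => r t; rewrite !mxE hs !mxE (inj_eq injg).
have d2 : DE = mxsub (fun u => (s^-1)%g (c' u)) (fun u => (s^-1)%g (c' u))
                 (diag_mx (\row_t I t)).
  apply/matrixP => u v; rewrite !mxE (hs ((s^-1)%g (c' u))) permKV /c /c' cast_ordK.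
  by rewrite !mxE (inj_eq injg').
split => H.
  by rewrite d1; apply: dvdm_sub; apply/step1.
by apply/step1; rewrite d2; apply: dvdm_sub.
Qed.

Lemma core_dvd n (N : 'M[K]_n) (I : 'I_n -> {poly K}) : invariant_factors N I ->
  forall j, (j <= n)%N -> dvdm j (partial_prod I j) (char_poly_mx N).
Proof.
move=> hI j hj; apply/(core hI) => f g; apply: diag_minor_dvd.
by case: hI.
Qed.

Lemma core_gcd n (N : 'M[K]_n) (I : 'I_n -> {poly K}) : invariant_factors N I ->
  forall j d, (j <= n)%N -> dvdm j d (char_poly_mx N) -> d %| partial_prod I j.
Proof.
move=> hI j d hj /(core hI) H.
by rewrite /partial_prod -(diag_minor_lead I hj); apply: H.
Qed.
End Core.

Unset Implicit Arguments.

Theorem lemma2p1 (k : fieldType) (p : nat) (hchar : has_char k p)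
    (hperf : perfect_field k) (n : nat) (M : 'M[{poly k}]_n)
    (I : 'I_n -> {poly {poly k}})
    (hI : invariant_factors (map_mx (@tofrac _) M)
            (fun i => map_poly (@tofrac _) (I i)))
    (l : fieldExtType k) (a : l) (Ia : 'I_n -> {poly l})
    (hIa : invariant_factors
             (map_mx (fun q : {poly k} => (map_poly (in_alg l) q).[a]) M) Ia)
    (j : nat) (hj1 : (1 <= j)%N) (hjn : (j <= n)%N) :
  map_poly (fun q : {poly k} => (map_poly (in_alg l) q).[a]) (partial_prod I j)
    %| partial_prod Ia j.
Proof.
set G := partial_prod I j.
pose phi := horner_eval a \o map_poly (in_alg l).
change (map_poly phi G %| partial_prod Ia j).
have tinj : injective (@tofrac {poly k}).
  by move=> x y /eqP; rewrite tofrac_eq => /eqP.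
have Imon : forall i, I i \is monic.
  move=> i; case: hI => /(_ i) + _ _.
  rewrite !monicE lead_coef_map_inj ?rmorph0 // => /eqP h.
  by apply/eqP/tinj; rewrite h rmorph1.
have Gmon : G \is monic by apply: monic_prod => i _; exact: Imon.
apply: (core_gcd hIa hjn) => f g.
set m := mnr (char_poly_mx M) f g.
have mmap : map_poly (@tofrac _) m = mnr (char_poly_mx (map_mx (@tofrac _) M)) f g.
  by rewrite /m /mnr -det_map_mx map_mxsub map_char_poly_mx.
have d1 : map_poly (@tofrac _) G %| map_poly (@tofrac _) m.
  rewrite mmap /G /partial_prod rmorph_prod.
  exact: (core_dvd hI hjn).
have hq : m = Pdiv.CommonRing.rdivp m G * G + Pdiv.CommonRing.rmodp m G.
  exact: Pdiv.RingMonic.rdivp_eq.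
have r0 : Pdiv.CommonRing.rmodp m G = 0.
  set r := Pdiv.CommonRing.rmodp m G.
  set q := Pdiv.CommonRing.rdivp m G.
  apply: (map_inj_poly tinj (rmorph0 _)); rewrite map_poly0.
  have er : map_poly (@tofrac _) r = map_poly (@tofrac _) m - map_poly (@tofrac _) q * map_poly (@tofrac _) G.
    by rewrite [in X in _ = X - _]hq rmorphD rmorphM /= addrC addKr.
  have hdv : map_poly (@tofrac _) G %| map_poly (@tofrac _) r.
    by rewrite er dvdp_sub // dvdp_mull // dvdpp.
  have hsz : (size (map_poly (@tofrac _) r) < size (map_poly (@tofrac _) G))%N.
    rewrite !size_map_inj_poly ?rmorph0 //.
    exact: Pdiv.CommonRing.ltn_rmodpN0 (monic_neq0 Gmon).
  apply/eqP; apply/negPn/negP => nz.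
  by have := dvdp_leq nz hdv; rewrite leqNgt hsz.
have mphi : map_poly phi m = mnr (char_poly_mx (map_mx phi M)) f g.
  by rewrite /m /mnr -det_map_mx map_mxsub map_char_poly_mx.
rewrite -mphi hq r0 addr0 rmorphM.
exact: dvdp_mulIr.
Qed.
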